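(* Let $k\ge 3$, let $i,i'$ be two distinct vertices and $c,c'\in[k]$. Let $H=H(i,i',c,c')$ be the partially pre-coloured graph built as follows: take two disjoint $k$-cliques with vertices $l_1,\dots,l_k$ and $r_1,\dots,r_k$; add the edge $\{i,l_1\}$; add a new vertex $w$, pre-coloured with colour $c$, adjacent to $l_2,\dots,l_{k-1}$; add the edge $\{i',r_1\}$; add a new vertex $w'$, pre-coloured with colour $c'$, adjacent to $r_2,\dots,r_{k-1}$; finally, if $c=c'$ add the edge $\{l_k,r_k\}$, and if $c\neq c'$ identify $l_k$ and $r_k$ into a single vertex. Then: (1) $H$ has $O(k)$ vertices; (2) $H$ has two pre-coloured vertices, each of degree $O(k)$; (3) for every pair $(b,b')\in[k]^2$ with $(b,b')\neq(c,c')$ there is a legal $k$-colouring $\chi$ of $H$ extending the pre-colouring with $\chi(i)=b$ and $\chi(i')=b'$, while no legal $k$-colouring of $H$ extending the pre-colouring has $\chi(i)=c$ and $\chi(i')=c'$.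
   Context: A legal $k$-colouring of a graph is a map from its vertices to $[k]$ assigning distinct colours to the endpoints of every edge; it extends a pre-colouring if it agrees with the prescribed colours on the pre-coloured vertices. *)

(* Defs.v *)
From mathcomp Require Import all_boot.
Set Implicit Arguments. Unset Strict Implicit. Unset Printing Implicit Defensive.

Definition legal_colouring (T : finType) (k : nat) (V : {set T}) (adj : rel T)
  (chi : T -> 'I_k) : Prop :=
  forall x y, x \in V -> y \in V -> adj x y -> chi x != chi y.

Definition degree (T : finType) (V : {set T}) (adj : rel T) (x : T) : nat :=
  #|[set y in V | adj x y]|.

(* Raw vertices of the gadget H(i,i',c,c'):
   inl 0 = i, inl 1 = i', inl 2 = w, inl 3 = w',
   inr (inl j) = l_(j+1), inr (inr j) = r_(j+1)   (j : 'I_k). *)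
Definition hvert (k : nat) := ('I_4 + ('I_k + 'I_k))%type.

Definition vI  {k} : hvert k := inl (@Ordinal 4 0 isT).
Definition vI' {k} : hvert k := inl (@Ordinal 4 1 isT).
Definition vW  {k} : hvert k := inl (@Ordinal 4 2 isT).
Definition vW' {k} : hvert k := inl (@Ordinal 4 3 isT).
Definition vL {k} (j : 'I_k) : hvert k := inr (inl j).
Definition vR {k} (j : 'I_k) : hvert k := inr (inr j).

(* Edges before the possible identification of l_k and r_k. *)
Definition base_arc (k : nat) (c c' : 'I_k) (x y : hvert k) : bool :=
  match x, y with
  | inr (inl a), inr (inl b) => a != b
  | inr (inr a), inr (inr b) => a != b
  | inl o, inr (inl b) =>
      ((val o == 0) && (val b == 0))
      || ((val o == 2) && (0 < val b < k.-1))
  | inl o, inr (inr b) =>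
      ((val o == 1) && (val b == 0))
      || ((val o == 3) && (0 < val b < k.-1))
  | inr (inl a), inr (inr b) =>
      [&& c == c', val a == k.-1 & val b == k.-1]
  | _, _ => false
  end.

Definition base_adj (k : nat) (c c' : 'I_k) : rel (hvert k) :=
  fun x y => base_arc c c' x y || base_arc c c' y x.

(* If c <> c', r_k is identified with l_k. *)
Definition hcanon (k : nat) (c c' : 'I_k) (x : hvert k) : hvert k :=
  if c == c' then x else
  match x with
  | inr (inr b) => if val b == k.-1 then inr (inl b) else x
  | _ => x
  end.

Definition hV (k : nat) (c c' : 'I_k) : {set hvert k} :=
  [set hcanon c c' x | x : hvert k].

Definition hadj (k : nat) (c c' : 'I_k) : rel (hvert k) :=
  fun x y => (x != y) &&
    [exists u, exists v,
       [&& hcanon c c' u == x, hcanon c c' v == y & base_adj c c' u v]].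

Definition extends_precol (k : nat) (c c' : 'I_k) (chi : hvert k -> 'I_k) : Prop :=
  chi vW = c /\ chi vW' = c'.

(* Main.v *)
Require Import Defs.
From mathcomp Require Import all_boot fingroup perm zify.

Lemma ex_inj k (a b x y : 'I_k) : a != b -> x != y ->
  exists f : 'I_k -> 'I_k, injective f /\ f a = x /\ f b = y.
Proof.
move=> ab xy.
set t1 := tperm a x. set t2 := tperm (t1 b) y.
exists (fun z => t2 (t1 z)); split; first by move=> u v /perm_inj /perm_inj.
have hx : t1 b != x.
  apply/eqP => E; have : t1 b = t1 a by rewrite E /t1 tpermL.
  by move/perm_inj => ba; rewrite ba eqxx in ab.
split; last exact: tpermL.
by rewrite /t2 /t1 tpermL tpermD // eq_sym.
Qed.

Arguments ex_inj {k a b x y}.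

Lemma avoid2 k (p q : 'I_k) : 3 <= k -> exists z : 'I_k, z != p /\ z != q.
Proof.
move=> k3; case: (pickP (fun z => (z != p) && (z != q))) => [z /andP[]|H].
  by exists z.
have : [set: 'I_k] \subset [set p; q].
  apply/subsetP => z _; move: (H z) => /= /negbT; rewrite negb_and !negbK !inE.
  by case/orP => ->; rewrite ?orbT.
move/subset_leq_card; rewrite cardsT card_ord cards2.
by case: (p != q) => /= h; move: (leq_trans k3 h).
Qed.

Section Build.
Variables (k : nat) (c c' b b' x y x' y' : 'I_k).
Hypothesis k2 : 1 < k.
Let o0 : 'I_k := @Ordinal k 0 (ltnW k2).
Let hl : k.-1 < k. Proof. by rewrite ltn_predL ltnW. Qed.
Let olast : 'I_k := @Ordinal k k.-1 hl.
Hypotheses (xy : x != y) (xy' : x' != y') (xb : x != b) (xb' : x' != b').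
Hypotheses (cx : (c == x) || (c == y)) (cx' : (c' == x') || (c' == y')).
Hypothesis yy : if c == c' then y != y' else y == y'.

Lemma build : exists chi : hvert k -> 'I_k,
  legal_colouring (hV c c') (hadj c c') chi /\ extends_precol c c' chi /\
  chi vI = b /\ chi vI' = b'.
Proof.
have o0l : o0 != olast by rewrite -val_eqE /= eq_sym -(subn1 k) subn_eq0 -ltnNge.
have [pL [iL [pL0 pLl]]] := ex_inj o0l xy.
have [pR [iR [pR0 pRl]]] := ex_inj o0l xy'.
pose chi (v : hvert k) := match v with
 | inl o => if val o == 0 then b else if val o == 1 then b' else if val o == 2 then c else c'
 | inr (inl j) => pL j
 | inr (inr j) => pR j end.
have canon u : chi (hcanon c c' u) = chi u.
  rewrite /hcanon; case: eqP => // ncc; case: u => [o|[j|j]] //=.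
  case: eqP => //= hj.
  have -> : j = olast by apply: val_inj.
  by rewrite pLl pRl; move: yy; case: eqP => // _ /eqP.
have mid (p : 'I_k -> 'I_k) (ip : injective p) cc (d : 'I_k) :
    p o0 != p olast -> (cc == p o0) || (cc == p olast) -> 0 < d < k.-1 -> cc != p d.
  move=> _ hc /andP[d0 dl]; case/orP: hc => /eqP ->; rewrite (inj_eq ip) -val_eqE /=.
    by rewrite eq_sym -lt0n.
  by rewrite neq_ltn dl orbT.
have arc u v : base_arc c c' u v -> chi u != chi v.
  case: u => [o|[a|a]]; case: v => [o'|[d|d]] //=.
  - case/orP => /andP[/eqP ho hd]; rewrite ho /=.
      have -> : d = o0 by apply: val_inj; apply/eqP.
      by rewrite pL0 eq_sym.
    by apply: mid => //; rewrite ?pL0 ?pLl.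
  - case/orP => /andP[/eqP ho hd]; rewrite ho /=.
      have -> : d = o0 by apply: val_inj; apply/eqP.
      by rewrite pR0 eq_sym.
    by apply: mid => //; rewrite ?pR0 ?pRl.
  - by rewrite (inj_eq iL).
  - case/and3P => /eqP ecc ha hd.
    have -> : a = olast by apply: val_inj; apply/eqP.
    have -> : d = olast by apply: val_inj; apply/eqP.
    by rewrite pLl pRl; move: yy; rewrite ecc eqxx.
  - by rewrite (inj_eq iR).
exists chi; split; last by [].
move=> X Y _ _ /andP[_ /existsP[u /existsP[v /and3P[/eqP<- /eqP<- H]]]].
rewrite !canon; case/orP: H => /arc //; by rewrite eq_sym.
Qed.
End Build.

Section Neg.
Variables (k : nat) (c c' : 'I_k).
Hypothesis k2 : 1 < k.

Lemma hcanonL j : hcanon c c' (vL j) = vL j.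
Proof. by rewrite /hcanon; case: ifP. Qed.

Lemma hcanonR j : hcanon c c' (vR j) =
  if (c != c') && (val j == k.-1) then vL j else vR j.
Proof. by rewrite /hcanon; case: eqP => //=; case: ifP. Qed.

Lemma hcanonI (o : 'I_4) : hcanon c c' (inl o) = inl o.
Proof. by rewrite /hcanon; case: ifP. Qed.

Lemma noext chi : legal_colouring (hV c c') (hadj c c') chi ->
  extends_precol c c' chi -> chi vI = c -> chi vI' = c' -> False.
Proof.
move=> leg [hw hw'] hi hi'.
have E u v : base_adj c c' u v -> hcanon c c' u != hcanon c c' v ->
    chi (hcanon c c' u) != chi (hcanon c c' v).
  move=> H neq; apply: leg; rewrite ?imset_f //.
  rewrite /hadj neq /=; apply/existsP; exists u; apply/existsP; exists v.
  by rewrite !eqxx H.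
have iL : injective (fun j => chi (vL j)).
  move=> a d /= e; apply/eqP; apply: contraT => ne.
  have := E (vL a) (vL d); rewrite !hcanonL e eqxx /base_adj /= ne => /(_ isT).
  by apply.
have iR : injective (fun j => chi (hcanon c c' (vR j))).
  move=> a d /= e; apply/eqP; apply: contraT => ne.
  have := E (vR a) (vR d); rewrite e eqxx /base_adj /= ne => /(_ isT).
  apply; rewrite !hcanonR.
  case: ifP => _; case: ifP => _;
    by rewrite /vL /vR ?(inj_eq inr_inj) ?(inj_eq inl_inj) ?(inj_eq inr_inj).
have [jL /= hjL] : exists j, chi (vL j) = c.
  have := inj_card_onto iL (leqnn _) c; case/codomP => j e; exists j; exact: (esym e).
have [jR /= hjR] : exists j, chi (hcanon c c' (vR j)) = c'.
  have := inj_card_onto iR (leqnn _) c'; case/codomP => j e; exists j; exact: (esym e).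
have lL : val jL = k.-1.
  case: (ltnP 0 jL) => [p|]; last first.
    rewrite leqn0 => /eqP j0.
    have := E vI (vL jL); rewrite hcanonL hcanonI /base_adj /= j0 /= => /(_ isT isT).
    by rewrite -/vI hi hjL eqxx.
  case: (ltnP jL k.-1) => [q|].
    have := E vW (vL jL); rewrite hcanonL hcanonI /base_adj /= p q /= => /(_ isT isT).
    by rewrite -/vW hw hjL eqxx.
  by move=> h; apply/eqP; rewrite eqn_leq h -ltnS prednK ?(ltn_ord jL) // ltnW.
have lR : val jR = k.-1.
  have nq o : hcanon c c' (inl o) != hcanon c c' (vR jR).
    by rewrite hcanonI hcanonR; case: ifP.
  case: (ltnP 0 jR) => [p|]; last first.
    rewrite leqn0 => /eqP j0.
    have := E vI' (vR jR); rewrite /base_adj /= j0 /= => /(_ isT (nq _)).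
    by rewrite hcanonI -/vI' hi' hjR eqxx.
  case: (ltnP jR k.-1) => [q|].
    have := E vW' (vR jR); rewrite /base_adj /= p q /= => /(_ isT (nq _)).
    by rewrite hcanonI -/vW' hw' hjR eqxx.
  by move=> h; apply/eqP; rewrite eqn_leq h -ltnS prednK ?(ltn_ord jR) // ltnW.
have ej : jR = jL by apply: val_inj; rewrite lL lR.
case: (eqVneq c c') => ecc.
  have h1 : base_adj c c' (vL jL) (vR jR) by rewrite /base_adj /= ecc eqxx lL lR eqxx.
  have h2 : hcanon c c' (vL jL) != hcanon c c' (vR jR) by rewrite hcanonL hcanonR ecc eqxx.
  by have := E _ _ h1 h2; rewrite hjR hcanonL hjL ecc eqxx.
move: hjR; rewrite hcanonR ecc lR eqxx /= ej hjL => /eqP; by rewrite (negbTE ecc).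
Qed.
End Neg.

Theorem claim3p2 :
  exists C : nat, forall (k : nat), 3 <= k -> forall c c' : 'I_k,
    (* (1) O(k) vertices *)
    #|hV c c'| <= C * k /\
    (* (2) the two pre-coloured vertices w, w' have degree O(k) *)
    (vW \in hV c c' /\ vW' \in hV c c' /\
     degree (hV c c') (hadj c c') vW <= C * k /\
     degree (hV c c') (hadj c c') vW' <= C * k) /\
    (* (3) *)
    (forall b b' : 'I_k, (b, b') != (c, c') ->
       exists chi : hvert k -> 'I_k,
         legal_colouring (hV c c') (hadj c c') chi /\ extends_precol c c' chi /\
         chi vI = b /\ chi vI' = b') /\
    ~ (exists chi : hvert k -> 'I_k,
         legal_colouring (hV c c') (hadj c c') chi /\ extends_precol c c' chi /\
         chi vI = c /\ chi vI' = c').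
Proof.
exists 4 => k k3 c c'.
have k2 : 1 < k by apply: ltnW.
have card : #|{: hvert k}| <= 4 * k.
  rewrite /hvert !card_sum !card_ord.
  lia.
have inV o : (inl o : hvert k) \in hV c c'.
  by apply/imsetP; exists (inl o) => //; rewrite hcanonI.
split; first exact: leq_trans (max_card _) card.
split; first by rewrite !inV /degree !(leq_trans (max_card _) card).
split; last first.
  by case=> chi [leg [ext [hi hi']]]; exact: (@noext k c c' k2 chi leg ext hi hi').
move=> b b'; rewrite xpair_eqE negb_and => hne.
case: (eqVneq c c') => ecc.
  subst c'.
  case: (eqVneq b c) => bc.
    have hb' : b' != c by move: hne; rewrite bc eqxx.
    have [z1 [z1c _]] := avoid2 k c c k3.
    have [z2 [z2c _]] := avoid2 k c c k3.
    apply: (@build k c c b b' z1 c c z2 k2) => //; rewrite ?eqxx ?orbT ?bc //; by rewrite eq_sym.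
  case: (eqVneq b' c) => b'c.
    have [z1 [z1c _]] := avoid2 k c c k3.
    have [z2 [z2c _]] := avoid2 k c c k3.
    apply: (@build k c c b b' c z1 z2 c k2) => //; rewrite ?eqxx ?orbT ?b'c //; by rewrite eq_sym.
  have [z1 [z1c _]] := avoid2 k c c k3.
  have [z2 [z2c z21]] := avoid2 k c z1 k3.
  apply: (@build k c c b b' c z1 c z2 k2) => //; rewrite ?eqxx ?orbT //; by rewrite eq_sym.
case: (eqVneq b c) => bc.
  have hb' : b' != c' by move: hne; rewrite bc eqxx.
  have [z [zc _]] := avoid2 k c c k3.
  apply: (@build k c c' b b' z c c' c k2) => //; rewrite ?eqxx ?orbT ?bc ?(negbTE ecc) //; by rewrite eq_sym.
case: (eqVneq b' c') => b'c.
  have [z [zc _]] := avoid2 k c' c' k3.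
  apply: (@build k c c' b b' c c' z c' k2) => //; rewrite ?eqxx ?orbT ?b'c ?(negbTE ecc) //; by rewrite eq_sym.
have [z [zc zc']] := avoid2 k c c' k3.
apply: (@build k c c' b b' c z c' z k2) => //; rewrite ?eqxx ?orbT ?(negbTE ecc) //; by rewrite eq_sym.
Qed.
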